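(* Let $\mathbb{X}$ be a real or complex Banach algebra with identity, let $k\ge1$ be an integer, let $a_0,\dots,a_k,b_0,\dots,b_k\in\mathbb{X}$ with $a_k\ne0$ or $b_k\ne0$, and let $g_n:\mathbb{X}\to\mathbb{X}$, $n\ge0$, be functions such that for some real $\sigma>0$, $$|g_n(\xi)|\le\sigma|\xi|\quad\text{for all }\xi\in\mathbb{X}\text{ and all }n.$$ Assume $$\alpha:=\sum_{i=0}^{k}\big(|a_i|+\sigma|b_i|\big)<1.$$ Then every solution $\{x_n\}$ of $$x_{n+1}=\sum_{i=0}^{k}a_ix_{n-i}+g_n\Big(\sum_{i=0}^{k}b_ix_{n-i}\Big),\quad n=0,1,2,\dots$$ with initial values $x_0,x_{-1},\dots,x_{-k}\in\mathbb{X}$ satisfies, for all $n\ge1$, $$|x_n|\le\alpha^{n/(k+1)}\max\{|x_0|,|x_{-1}|,\dots,|x_{-k}|\}.$$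
   Context: A Banach algebra with identity is a Banach space $\mathbb{X}$ (norm $|\cdot|$) with an associative, bilinear multiplication satisfying $|xy|\le|x||y|$ and having an identity $1$ with $|1|=1$; scalar multiplication satisfies $\alpha(xy)=(\alpha x)y=x(\alpha y)$. A solution of the difference equation is the sequence generated by iteration from the $k+1$ initial values. *)

(* Defs.v *)
From Stdlib Require Import Reals ZArith.
Open Scope R_scope.

(* A real Banach algebra with identity.  (A complex Banach algebra is in
   particular a real one by restriction of scalars, with the same norm.) *)
Record BanachAlgebra := {
  carrier :> Type;
  bzero : carrier;
  bone : carrier;
  badd : carrier -> carrier -> carrier;
  bopp : carrier -> carrier;
  bscal : R -> carrier -> carrier;
  bmul : carrier -> carrier -> carrier;
  bnorm : carrier -> R;
  badd_assoc : forall x y z, badd x (badd y z) = badd (badd x y) z;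
  badd_comm : forall x y, badd x y = badd y x;
  badd_0 : forall x, badd x bzero = x;
  badd_opp : forall x, badd x (bopp x) = bzero;
  bscal_assoc : forall a b x, bscal a (bscal b x) = bscal (a * b) x;
  bscal_1 : forall x, bscal 1 x = x;
  bscal_addr : forall a x y, bscal a (badd x y) = badd (bscal a x) (bscal a y);
  bscal_addl : forall a b x, bscal (a + b) x = badd (bscal a x) (bscal b x);
  bnorm_eq0 : forall x, bnorm x = 0 <-> x = bzero;
  bnorm_scal : forall a x, bnorm (bscal a x) = Rabs a * bnorm x;
  bnorm_triangle : forall x y, bnorm (badd x y) <= bnorm x + bnorm y;
  bcomplete : forall u : nat -> carrier,
    (forall eps, eps > 0 -> exists N, forall m n, (m >= N)%nat -> (n >= N)%nat ->
        bnorm (badd (u m) (bopp (u n))) < eps) ->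
    exists l, forall eps, eps > 0 -> exists N, forall n, (n >= N)%nat ->
        bnorm (badd (u n) (bopp l)) < eps;
  bmul_assoc : forall x y z, bmul x (bmul y z) = bmul (bmul x y) z;
  bmul_addl : forall x y z, bmul (badd x y) z = badd (bmul x z) (bmul y z);
  bmul_addr : forall x y z, bmul x (badd y z) = badd (bmul x y) (bmul x z);
  bmul_scall : forall a x y, bmul (bscal a x) y = bscal a (bmul x y);
  bmul_scalr : forall a x y, bmul x (bscal a y) = bscal a (bmul x y);
  bnorm_mul : forall x y, bnorm (bmul x y) <= bnorm x * bnorm y;
  bmul_1l : forall x, bmul bone x = x;
  bmul_1r : forall x, bmul x bone = x;
  bnorm_1 : bnorm bone = 1
}.

Arguments bzero {_}. Arguments bone {_}. Arguments badd {_}. Arguments bopp {_}.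
Arguments bscal {_}. Arguments bmul {_}. Arguments bnorm {_}.

Fixpoint bsum (X : BanachAlgebra) (f : nat -> X) (k : nat) : X :=
  match k with
  | O => f O
  | S k' => badd (bsum X f k') (f (S k'))
  end.

Fixpoint maxR (f : nat -> R) (k : nat) : R :=
  match k with
  | O => f O
  | S k' => Rmax (maxR f k') (f (S k'))
  end.

(* real power with the convention 0^y = 0 (used only for y > 0) *)
Definition rpow (x y : R) : R := if Rle_dec x 0 then 0 else Rpower x y.

(* Main.v *)
Require Import Defs.
From Stdlib Require Import Reals ZArith Lra Lia.
Open Scope R_scope.

Lemma bnorm_ge0 (X : BanachAlgebra) (x : X) : 0 <= bnorm x.
Proof.
  assert (H0 : bscal 0 x = bzero).
  { apply bnorm_eq0. rewrite bnorm_scal, Rabs_R0. ring. }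
  assert (H : badd x (bscal (-1) x) = bzero).
  { rewrite <- (bscal_1 X x) at 1. rewrite <- bscal_addl.
    replace (1 + -1) with 0 by ring. exact H0. }
  assert (Hz : bnorm (@bzero X) = 0) by (apply bnorm_eq0; reflexivity).
  pose proof (bnorm_triangle X x (bscal (-1) x)) as T.
  rewrite H, Hz, bnorm_scal in T.
  replace (Rabs (-1)) with 1 in T by (unfold Rabs; destruct (Rcase_abs (-1)); lra). lra.
Qed.

Lemma bnorm_bsum (X : BanachAlgebra) (f : nat -> X) k :
  bnorm (bsum X f k) <= sum_f_R0 (fun i => bnorm (f i)) k.
Proof.
  induction k; simpl. lra.
  eapply Rle_trans. apply bnorm_triangle. lra.
Qed.

Lemma maxR_ge (f : nat -> R) k j : (j <= k)%nat -> f j <= maxR f k.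
Proof.
  induction k; intros H.
  - replace j with 0%nat by lia. simpl. lra.
  - simpl. destruct (Nat.eq_dec j (S k)).
    + subst. apply Rmax_r.
    + eapply Rle_trans. apply IHk. lia. apply Rmax_l.
Qed.

Lemma sum_ge_term (c : nat -> R) k j :
  (forall i, 0 <= c i) -> (j <= k)%nat -> c j <= sum_f_R0 c k.
Proof.
  intros Hc. induction k; intros H.
  - replace j with 0%nat by lia. simpl. lra.
  - simpl. destruct (Nat.eq_dec j (S k)).
    + subst. assert (0 <= sum_f_R0 c k).
      { clear IHk H. induction k; simpl; pose proof (Hc 0%nat); try pose proof (Hc (S k)); lra. }
      lra.
    + pose proof (IHk ltac:(lia)). pose proof (Hc (S k)). lra.
Qed.

Lemma sum_split (p q : nat -> R) s B k :
  sum_f_R0 (fun i => p i * B) k + s * sum_f_R0 (fun i => q i * B) k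
  = sum_f_R0 (fun i => p i + s * q i) k * B.
Proof. induction k; simpl. ring. rewrite Rmult_plus_distr_r, <- IHk. ring. Qed.

Lemma Rpower_anti (al e1 e2 : R) : 0 < al < 1 -> e2 <= e1 ->
  Rpower al e1 <= Rpower al e2.
Proof.
  intros Ha He. unfold Rpower.
  assert (Hl : ln al < 0) by (rewrite <- ln_1; apply ln_increasing; lra).
  destruct (Rle_lt_or_eq_dec _ _ He) as [Hlt|Heq].
  - left. apply exp_increasing. nra.
  - subst. lra.
Qed.

Theorem lemma2 (X : BanachAlgebra) (k : nat) (a b : nat -> X)
  (g : nat -> X -> X) (sigma : R) (x : Z -> X) :
  (1 <= k)%nat ->
  (a k <> bzero \/ b k <> bzero) ->
  sigma > 0 ->
  (forall (n : nat) (xi : X), bnorm (g n xi) <= sigma * bnorm xi) ->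
  sum_f_R0 (fun i => bnorm (a i) + sigma * bnorm (b i)) k < 1 ->
  (forall n : nat,
     x (Z.of_nat n + 1)%Z =
     badd (bsum X (fun i => bmul (a i) (x (Z.of_nat n - Z.of_nat i)%Z)) k)
          (g n (bsum X (fun i => bmul (b i) (x (Z.of_nat n - Z.of_nat i)%Z)) k))) ->
  forall n : Z, (1 <= n)%Z ->
    bnorm (x n) <=
      rpow (sum_f_R0 (fun i => bnorm (a i) + sigma * bnorm (b i)) k)
           (IZR n / INR (k + 1))
      * maxR (fun j => bnorm (x (- Z.of_nat j)%Z)) k.
Proof.
  intros Hk Hab Hs Hg Hal Hrec.
  set (al := sum_f_R0 (fun i => bnorm (a i) + sigma * bnorm (b i)) k) in *.
  set (M := maxR (fun j => bnorm (x (- Z.of_nat j)%Z)) k).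
  assert (Hc : forall i, 0 <= bnorm (a i) + sigma * bnorm (b i)).
  { intros i. pose proof (bnorm_ge0 X (a i)). pose proof (bnorm_ge0 X (b i)). nra. }
  assert (Hapos : 0 < al).
  { eapply Rlt_le_trans. 2: apply (sum_ge_term _ k k Hc); lia.
    pose proof (bnorm_ge0 X (a k)). pose proof (bnorm_ge0 X (b k)).
    destruct Hab as [Hn|Hn].
    - assert (bnorm (a k) <> 0) by (intro E; apply Hn; apply bnorm_eq0; exact E). nra.
    - assert (bnorm (b k) <> 0) by (intro E; apply Hn; apply bnorm_eq0; exact E). nra. }
  assert (HM : 0 <= M).
  { eapply Rle_trans. apply bnorm_ge0. apply (maxR_ge (fun j => bnorm (x (- Z.of_nat j)%Z)) k 0). lia. }
  assert (HK : 0 < INR (k + 1)) by (apply lt_0_INR; lia).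
  set (E := fun m : Z => IZR (Z.max m 0) / INR (k + 1)).
  assert (Q : forall n : nat, forall m : Z, (- Z.of_nat k <= m <= Z.of_nat n)%Z ->
            bnorm (x m) <= M * Rpower al (E m)).
  { induction n as [|n IH]; intros m Hm.
    - unfold E. rewrite Z.max_r by lia. replace (IZR 0 / INR (k+1)) with 0 by (simpl; field; lra).
      rewrite Rpower_O by lra. rewrite Rmult_1_r.
      replace m with (- Z.of_nat (Z.to_nat (- m)))%Z by lia.
      apply (maxR_ge (fun j => bnorm (x (- Z.of_nat j)%Z))). lia.
    - destruct (Z.eq_dec m (Z.of_nat (S n))) as [Em|Em].
      2: { apply IH. lia. }
      subst m. rewrite Nat2Z.inj_succ. rewrite <- Z.add_1_r.
      set (B := M * Rpower al (E (Z.of_nat n - Z.of_nat k)%Z)).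
      assert (Hx : forall i, (i <= k)%nat -> bnorm (x (Z.of_nat n - Z.of_nat i)%Z) <= B).
      { intros i Hi. eapply Rle_trans. apply IH. lia. unfold B.
        apply Rmult_le_compat_l. exact HM. apply Rpower_anti. lra.
        unfold E. unfold Rdiv. apply Rmult_le_compat_r. left; apply Rinv_0_lt_compat; lra.
        apply IZR_le. lia. }
      assert (HB : forall (c : nat -> X),
        bnorm (bsum X (fun i => bmul (c i) (x (Z.of_nat n - Z.of_nat i)%Z)) k)
        <= sum_f_R0 (fun i => bnorm (c i) * B) k).
      { intros c. eapply Rle_trans. apply bnorm_bsum. apply sum_Rle. intros i Hi.
        eapply Rle_trans. apply bnorm_mul. apply Rmult_le_compat_l. apply bnorm_ge0. auto. }
      assert (Hstep : bnorm (x (Z.of_nat n + 1)%Z) <= al * B).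
      { rewrite Hrec. eapply Rle_trans. apply bnorm_triangle.
        unfold al. rewrite <- sum_split. apply Rplus_le_compat. apply HB.
        eapply Rle_trans. apply Hg. apply Rmult_le_compat_l. lra. apply HB. }
      eapply Rle_trans. exact Hstep. unfold B.
      replace (al * (M * Rpower al (E (Z.of_nat n - Z.of_nat k)%Z)))
        with (M * (Rpower al 1 * Rpower al (E (Z.of_nat n - Z.of_nat k)%Z)))
        by (rewrite Rpower_1 by lra; ring).
      rewrite <- Rpower_plus. apply Rmult_le_compat_l. exact HM.
      apply Rpower_anti. lra. unfold E.
      apply (Rmult_le_reg_r (INR (k+1))). exact HK.
      unfold Rdiv. rewrite Rmult_plus_distr_r, !Rmult_assoc, Rinv_l by lra.
      rewrite !Rmult_1_r, Rmult_1_l. rewrite INR_IZR_INZ, <- plus_IZR. apply IZR_le. lia. }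
  intros n Hn.
  pose proof (Q (Z.to_nat n) n ltac:(lia)) as Hq.
  unfold E in Hq. rewrite Z.max_l in Hq by lia.
  unfold rpow. destruct (Rle_dec al 0). lra. rewrite Rmult_comm. exact Hq.
Qed.
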